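(* In the model described in the context, for $f\in\mathbb{R}$ let $X(f)\subseteq\mathbb{R}_+$ be the set of symmetric leader reactions when all followers take forward position $f$. There exist unique $\underline f,\bar f\in\mathbb{R}$ such that $f\in[\underline f,\bar f]$ if and only if $\frac1M(\alpha_x-\triangle C+f)\in X(f)$. Moreover: (1) $y_j\big(f\mathbf1,\frac1M(\alpha_x-\triangle C+f)\mathbf1\big)=0$ for all $f\in[\underline f,\bar f]$; (2) $\bar f-\underline f=O(\alpha_x/M)$.
   Context: Model: $M\ge1$ leaders and $N\ge2$ followers; inverse demand $P(q)=\alpha-\beta q$, $\alpha,\beta>0$; leader marginal cost $C$, follower marginal cost $c$, $c\ge C>0$; follower capacity $k>0$. Leader $i$ produces $x_i\ge0$; follower $j$ takes forward position $f_j\in\mathbb{R}$ and spot production $y_j\in[0,k]$. Given $\mathbf f,\mathbf x$, the spot market is the game among followers where follower $j$ chooses $y_j\in[0,k]$ to maximize $P(\sum_ix_i+\sum_{j'}y_{j'})(y_j-f_j)-cy_j$; its unique Nash equilibrium is $\mathbf y(\mathbf f,\mathbf x)=(y_1(\mathbf f,\mathbf x),\dots,y_N(\mathbf f,\mathbf x))$. Leader $i$'s payoff is $\psi_i=(P(\sum_ix_i+\sum_{j'}y_{j'}(\mathbf f,\mathbf x))-C)x_i$; $\psi_i(\bar x;x\mathbf1,f\mathbf1)$ denotes this payoff when leader $i$ produces $\bar x$, all other leaders produce $x$, and all followers take $f$. $X(f)=\{x\in\mathbb{R}_+:\ \psi_i(x;x\mathbf1,f\mathbf1)\ge\psi_i(\bar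 x;x\mathbf1,f\mathbf1)\ \forall\bar x\in\mathbb{R}_+,\ \forall i\}$. $\alpha_x=(\alpha-C)/\beta$, $\triangle C=(c-C)/\beta$. $O(\cdot)$ is standard Landau notation. *)

(* Defs.v *)
From HB Require Import structures.
From Stdlib Require Import ClassicalEpsilon.
From mathcomp Require Import all_boot all_order all_algebra.
From mathcomp Require Import reals.
Set Implicit Arguments. Unset Strict Implicit. Unset Printing Implicit Defensive.
Import Order.TTheory GRing.Theory Num.Theory.
Local Open Scope ring_scope.

Section Model.
Variable R : realType.
Variables (M N : nat) (alpha beta C c k : R).

Definition price (q : R) : R := alpha - beta * q.

Definition upd n (v : 'I_n -> R) (j : 'I_n) (z : R) : 'I_n -> R :=
  fun j' => if j' == j then z else v j'.

Definition follower_payoff (f : 'I_N -> R) (x : 'I_M -> R) (y : 'I_N -> R)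
  (j : 'I_N) : R :=
  price (\sum_(i < M) x i + \sum_(j' < N) y j') * (y j - f j) - c * y j.

Definition is_spot_NE (f : 'I_N -> R) (x : 'I_M -> R) (y : 'I_N -> R) : Prop :=
  forall j : 'I_N, (0 <= y j <= k) /\
    forall z : R, 0 <= z <= k ->
      follower_payoff f x (upd y j z) j <= follower_payoff f x y j.

Definition spot (f : 'I_N -> R) (x : 'I_M -> R) : 'I_N -> R :=
  epsilon (inhabits (fun _ : 'I_N => 0 : R)) (is_spot_NE f x).

Definition leader_payoff (f : 'I_N -> R) (x : 'I_M -> R) (i : 'I_M) : R :=
  (price (\sum_(l < M) x l + \sum_(j < N) spot f x j) - C) * x i.

Definition psi_sym (xb x f : R) (i : 'I_M) : R :=
  leader_payoff (fun _ => f) (upd (fun _ => x) i xb) i.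

Definition in_X (f x : R) : Prop :=
  0 <= x /\ forall (xb : R) (i : 'I_M), 0 <= xb -> psi_sym xb x f i <= psi_sym x x f i.

End Model.

(* Main.v *)
Require Import Defs.
From HB Require Import structures.
From Stdlib Require Import ClassicalEpsilon.
From mathcomp Require Import all_boot all_order all_algebra.
From mathcomp Require Import reals ring lra.
Import Order.TTheory GRing.Theory Num.Theory.
Local Open Scope ring_scope.
Set Implicit Arguments. Unset Strict Implicit.

Section Pure.
Variable R : realType.

Definition Cl (k w y : R) := (0 <= y /\ y <= k) /\ (y < k -> w <= y) /\ (0 < y -> y <= w).

Lemma Cl_uniq k w y1 y2 : Cl k w y1 -> Cl k w y2 -> y1 = y2.
Proof.
move=> [[a1 b1] [c1 d1]] [[a2 b2] [c2 d2]].
have [h1|h1] := ltrP y1 k; have [h2|h2] := ltrP y2 k;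
have [h3|h3] := ltrP 0 y1; have [h4|h4] := ltrP 0 y2;
try (move: (c1 h1)=> ?); try (move: (c2 h2)=>?); try (move: (d1 h3)=>?);
try (move: (d2 h4) => ?); lra.
Qed.

Lemma opt_Cl k w y : 0 <= y <= k ->
  (forall z, 0 <= z <= k -> (z - y) * (w - z) <= 0) -> Cl k w y.
Proof.
move=> /andP[y0 yk] H; split; first by [].
split.
- move=> ylt; rewrite leNgt; apply/negP => wy.
  have [hz|hz] := lerP ((y+w)/2) k.
  + have := H ((y+w)/2); rewrite hz andbT.
    have -> : 0 <= (y + w) / 2 by lra.
    move=> /(_ isT) h. nra.
  + have := H k; rewrite lexx andbT.
    have -> : 0 <= k by lra.
    move=> /(_ isT) h. nra.
- move=> ypos; rewrite leNgt; apply/negP => wy.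
  have [hz|hz] := lerP 0 ((y+w)/2).
  + have := H ((y+w)/2); rewrite hz /=.
    have -> : (y + w) / 2 <= k by lra.
    move=> /(_ isT) h. nra.
  + have := H 0; rewrite lexx /=.
    have -> : 0 <= k by lra.
    move=> /(_ isT) h. nra.
Qed.

Lemma Cl_opt k w y : Cl k w y -> forall z, 0 <= z <= k -> (z - y) * (w - z) <= 0.
Proof.
move=> [[a b] [c d]] z /andP[z0 zk].
have [h1|h1] := ltrP y k; have [h3|h3] := ltrP 0 y.
- have e : w = y by move: (c h1) (d h3); lra.
  rewrite e; have -> : (z - y) * (y - z) = - ((z - y) ^+ 2) by ring.
  by rewrite oppr_le0 sqr_ge0.
- have e : y = 0 by lra.
  move: (c h1); rewrite e => hw; rewrite subr0; nra.
- have e : y = k by lra.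
  move: (d h3); rewrite e => hw; have : z - k <= 0 by lra.
  have : 0 <= w - z by lra. nra.
- have e : y = 0 by lra. have e2 : z = 0 by lra. by rewrite e e2 !subrr mul0r.
Qed.

Lemma Cl_scale k u v l : 0 < l -> Cl k (v + l * (u - v)) v <-> Cl k u v.
Proof.
move=> l0; split => [[a [b c]]|[a [b c]]]; split => //; split.
- move=> /b h; nra.
- move=> /c h; nra.
- move=> /b h; nra.
- move=> /c h; nra.
Qed.

Definition clampk (k u : R) := if u <= 0 then 0 else if u < k then u else k.

Lemma clampkP k u : 0 < k -> Cl k u (clampk k u).
Proof.
move=> k0; rewrite /clampk; case: (lerP u 0) => h1.
  by split; [lra|split => ?; lra].
case: (ltrP u k) => h2; by split; [lra|split => ?; lra].
Qed.

End Pure.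

Unset Implicit Arguments.

Section Model2.
Variable R : realType.

Lemma sum_upd n (v : 'I_n -> R) j z :
  \sum_(i < n) upd v j z i = \sum_(i < n) v i - v j + z.
Proof.
rewrite (bigD1 j) //= [in RHS](bigD1 j) //= /upd eqxx.
rewrite (eq_bigr v); last by move=> i /negbTE ->.
ring.
Qed.

Variables (M N : nat) (alpha beta C c k : R).
Hypotheses (beta0 : 0 < beta) (k0 : 0 < k).

Lemma fp_diff (f0 : R) xv y j z :
  follower_payoff alpha beta c (fun _ : 'I_N => f0) xv (upd y j z) j
  - follower_payoff alpha beta c (fun _ => f0) xv y j =
  (z - y j) * (alpha - beta * (\sum_(i < M) xv i + \sum_(i < N) y i) - c
     + beta * f0 - beta * z).
Proof.
rewrite /follower_payoff sum_upd /upd eqxx /price; ring.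
Qed.

Lemma spot_val (f0 : R) (xv : 'I_M -> R) v :
  Cl k ((alpha - c - beta * \sum_(i < M) xv i + beta * f0) / (beta * (N%:R + 1))) v ->
  forall j, spot alpha beta c k (fun _ : 'I_N => f0) xv j = v.
Proof.
move=> Hv.
set Q := \sum_(i < M) xv i.
set u := (alpha - c - beta * Q + beta * f0) / (beta * (N%:R + 1)).
have bne : beta != 0 by rewrite gt_eqF.
have n1 : N%:R + 1 != 0 :> R by rewrite gt_eqF // ltr_wpDl.
have key : forall (y : 'I_N -> R) j z,
  follower_payoff alpha beta c (fun _ : 'I_N => f0) xv (upd y j z) j
  - follower_payoff alpha beta c (fun _ => f0) xv y j =
  beta * ((z - y j) * ((alpha - beta * (Q + \sum_(i < N) y i) - c + beta * f0) / beta - z)).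
  move=> y j z; rewrite fp_diff /Q. field.  exact: bne.
have NEv : is_spot_NE alpha beta c k (fun _ : 'I_N => f0) xv (fun _ => v).
  move=> j; split; first by case: Hv => [[-> ->]].
  move=> z hz; rewrite -subr_le0 key pmulr_rle0 //.
  apply: (Cl_opt (k:=k)); last exact: hz.
  rewrite sumr_const card_ord -mulr_natl.
  have -> : (alpha - beta * (Q + N%:R * v) - c + beta * f0) / beta
     = v + (N%:R + 1) * (u - v).
    by rewrite /u; field; rewrite n1 bne.
  by apply/Cl_scale => //; rewrite ltr_wpDl.
have := @epsilon_spec _ (inhabits (fun _ : 'I_N => 0 : R))
   (is_spot_NE alpha beta c k (fun _ : 'I_N => f0) xv) (ex_intro _ _ NEv).
rewrite /spot; set y := epsilon _ _ => Hy.
set W := (alpha - beta * (Q + \sum_(i < N) y i) - c + beta * f0) / beta.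
have ClW : forall j, Cl k W (y j).
  move=> j; case: (Hy j) => hb H; apply: (opt_Cl hb).
  move=> z hz; have := H z hz; rewrite -subr_le0 key pmulr_rle0 //.
have eqy : forall j j', y j = y j' by move=> j j'; exact: Cl_uniq (ClW j) (ClW j').
move=> j.
have sumY : \sum_(i < N) y i = N%:R * y j.
  by rewrite (eq_bigr (fun _ => y j)) ?sumr_const ?card_ord ?mulr_natl // => i _; apply: eqy.
have : Cl k W (y j) := ClW j.
have -> : W = y j + (N%:R + 1) * (u - y j) by rewrite /W sumY /u; field; rewrite n1 bne.
move/Cl_scale => H.
apply: Cl_uniq (H _) Hv; by rewrite ltr_wpDl.
Qed.

End Model2.

Set Implicit Arguments.

Section Core.
Variable R : realType.
Variables (n k : R).
Hypotheses (n1 : (1:R) <= n) (k0 : (0:R) < k).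

Let np : 0 < n + 1. Proof. by rewrite (lt_le_trans ltr01) // (le_trans n1) // lerDl. Qed.

Ltac prep := have k0' : 0 < k by exact: k0; have n1' : 1 <= n by exact: n1;
  have np' : 0 < n + 1 by exact: np.

Lemma cl0 (d : R) : d <= 0 -> clampk k (d / (n + 1)) = 0.
Proof.
prep.
move=> hd; have h : d / (n+1) <= 0 by rewrite ler_pdivrMr // mul0r.
by rewrite /clampk h.
Qed.

Lemma clmid (d : R) : 0 <= d <= (n + 1) * k -> clampk k (d / (n + 1)) = d / (n + 1).
Proof.
prep.
move=> /andP[h1 h2].
have a : d / (n+1) <= k by rewrite ler_pdivrMr // mulrC.
have b : 0 <= d / (n+1) by rewrite divr_ge0 // ltW.
rewrite /clampk; case: (lerP (d / (n+1)) 0) => h3; first by apply/eqP; rewrite eq_le h3 b.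
by case: (ltrP (d / (n+1)) k) => h4 //; apply/eqP; rewrite eq_le h4 a.
Qed.

Lemma clk (d : R) : (n + 1) * k <= d -> clampk k (d / (n + 1)) = k.
Proof.
prep.
move=> h.
have a : k <= d / (n+1) by rewrite ler_pdivlMr // mulrC.
rewrite /clampk; case: (lerP (d / (n+1)) 0) => h3; first by exfalso; lra.
by case: (ltrP (d / (n+1)) k) => h4 //; exfalso; lra.
Qed.

Definition G (x t xb : R) := (t + x - xb - n * clampk k ((x - xb) / (n + 1))) * xb.

Definition Pc (x t : R) := t <= x /\ (0 < x -> x <= (n + 1) * t) /\
   (0 < x -> (n + 2) * k < x - t -> (t + x - n * k) ^+ 2 <= 4 * t * x).

Lemma Gx (x t : R) : G x t x = t * x.
Proof. by rewrite /G subrr cl0 // mulr0; ring. Qed.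

Lemma core (x t : R) : 0 <= x -> (forall xb, 0 <= xb -> G x t xb <= t * x) <-> Pc x t.
Proof.
prep.
move=> x0; split.
- move=> H.
  have tx : t <= x.
    rewrite leNgt; apply/negP => xt.
    have := H ((t + x) / 2); rewrite /G cl0; last lra.
    move=> /(_ ltac:(lra)). nra.
  have s2 : 0 < x -> x <= (n + 1) * t.
    move=> xp; rewrite leNgt; apply/negP => xt.
    pose e := Num.min (Num.min x ((n + 1) * k)) ((x - (n + 1) * t) / 2).
    have e0 : 0 < e by rewrite !lt_min xp mulr_gt0 //=; lra.
    have e1 : e <= x by rewrite !ge_min lexx.
    have e2 : e <= (n + 1) * k by rewrite !ge_min lexx orbT.
    have e3 : e <= (x - (n + 1) * t) / 2 by rewrite !ge_min lexx orbT.
    have := H (x - e); rewrite /G.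
    have -> : x - (x - e) = e by ring.
    rewrite clmid; last by apply/andP; split; lra.
    have -> : t + x - (x - e) - n * (e / (n + 1)) = t + e / (n + 1).
      by field; exact: lt0r_neq0.
    move=> /(_ ltac:(lra)) h.
    have : t * x - (t + e / (n + 1)) * (x - e) = e / (n + 1) * ((n + 1) * t - x + e).
      by field; exact: lt0r_neq0.
    have : 0 < e / (n + 1) by rewrite divr_gt0.
    move=> h1 h2; nra.
  split => //; split => // xp hxt.
  have := s2 xp => s2'.
  have t0 : 0 < t.
    rewrite ltNge; apply/negP => t0.
    have : (n + 1) * t <= 0 by rewrite mulr_ge0_le0 // ltW.
    lra.
  have := H ((t + x - n * k) / 2); rewrite /G.
  rewrite clk; last by lra.
  move=> /(_ ltac:(lra)) h.
  have e : (t + x - (t + x - n * k) / 2 - n * k) * ((t + x - n * k) / 2)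
    = (t + x - n * k) ^+ 2 / 4 by field.
  rewrite e in h; lra.
- move=> [tx [s2 s3]] xb xb0; rewrite /G.
  have [hx|hx] := lerP x xb.
    rewrite cl0; last lra.
    have a1 : 0 <= xb - t by lra.
    have a2 : 0 <= xb - x by lra.
    have h := mulr_ge0 a1 a2.
    have e : t * x - (t + x - xb - n * 0) * xb = (xb - t) * (xb - x) by ring.
    by rewrite -subr_ge0 e.
  have xp : 0 < x by lra.
  have s2' := s2 xp.
  have [hm|hm] := lerP (x - xb) ((n + 1) * k).
    rewrite clmid; last by apply/andP; split; lra.
    have -> : t + x - xb - n * ((x - xb) / (n + 1)) = t + (x - xb) / (n + 1).
      by field; exact: lt0r_neq0.
    have : t * x - (t + (x - xb) / (n + 1)) * xb = (x - xb) / (n + 1) * ((n + 1) * t - xb).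
      by field; exact: lt0r_neq0.
    have : 0 < (x - xb) / (n + 1) by rewrite divr_gt0 //; lra.
    move=> h1 h2; nra.
  rewrite clk; last lra.
  have [hc|hc] := ltrP ((n + 2) * k) (x - t).
    have := s3 xp hc => h.
    have := sqr_ge0 (t + x - n * k - 2 * xb); nra.
  have a1 : 0 <= x - (n + 1) * k - xb by lra.
  have a2 : 0 <= t + k - xb by lra.
  have a3 : 0 <= (n + 1) * t - x by lra.
  have a4 : 0 <= (n + 1) * k by apply: mulr_ge0; apply: ltW.
  have h1 := mulr_ge0 a1 a2.
  have h2 := mulr_ge0 (ltW k0') a3.
  have h3 := mulr_ge0 a4 (ltW k0').
  have e : t * x - (t + x - xb - n * k) * xb = (x - (n + 1) * k - xb) * (t + k - xb)
     + k * ((n + 1) * t - x) + (n + 1) * k * k by ring.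
  rewrite -subr_ge0 e; lra.
Qed.

End Core.

Lemma psi_formula (R : realType) (M N : nat) (alpha beta C c k : R) :
  0 < beta -> 0 < k -> forall xb x f (i : 'I_M),
  psi_sym N alpha beta C c k xb x f i =
  (alpha - beta * (M%:R * x - x + xb + N%:R * clampk k
     ((alpha - c - beta * (M%:R * x - x + xb) + beta * f) / (beta * (N%:R + 1)))) - C) * xb.
Proof.
move=> b0 k0 xb x f i.
rewrite /psi_sym /leader_payoff.
have Hs : forall j, spot alpha beta c k (fun _ : 'I_N => f) (upd (fun _ => x) i xb) j
   = clampk k ((alpha - c - beta * (M%:R * x - x + xb) + beta * f) / (beta * (N%:R + 1))).
  move=> j; apply: spot_val => //.
  rewrite sum_upd sumr_const card_ord -[x *+ M]mulr_natl.
  exact: clampkP.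
rewrite (eq_bigr _ (fun j _ => Hs j)) sum_upd !sumr_const !card_ord -[x *+ M]mulr_natl -[_ *+ N]mulr_natl /upd eqxx /price.
ring.
Qed.

Lemma inX_iff (R : realType) (M N : nat) (alpha beta C c k : R) :
  (0 < M)%N -> (0 < N)%N -> 0 < beta -> 0 < k -> forall f : R,
  in_X M N alpha beta C c k f (((alpha - C) / beta - (c - C) / beta + f) / M%:R)
  <-> 0 <= ((alpha - C) / beta - (c - C) / beta + f) / M%:R /\
      Pc N%:R k (((alpha - C) / beta - (c - C) / beta + f) / M%:R) ((c - C) / beta - f).
Proof.
move=> M0 N0 b0 k0 f.
have nn1 : 1 <= N%:R :> R by rewrite ler1n.
set x := (_ / M%:R).
set t := (c - C) / beta - f.
have m0 : 0 < M%:R :> R by rewrite ltr0n.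
have bne : beta != 0 by rewrite gt_eqF.
have mne : M%:R != 0 :> R by rewrite gt_eqF.
have n1 : 0 < N%:R + 1 :> R by rewrite ltr_wpDl.
have n1ne : N%:R + 1 != 0 :> R by rewrite gt_eqF.
have Mx : M%:R * x = (alpha - C) / beta - (c - C) / beta + f.
  by rewrite /x mulrC divfK.
have key : forall (xb : R) (i : 'I_M), psi_sym N alpha beta C c k xb x f i = beta * G N%:R k x t xb.
  move=> xb i. rewrite (psi_formula N alpha C c b0 k0) Mx /G.
  have -> : (alpha - c - beta * ((alpha - C) / beta - (c - C) / beta + f - x + xb) + beta * f)
      / (beta * (N%:R + 1)) = (x - xb) / (N%:R + 1).
    by field; rewrite n1ne bne.
  by rewrite /t; field; rewrite bne.
have Gx' := Gx nn1 k0 x t.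
split.
- move=> [x0 H]; split => //.
  apply/(core nn1 k0 t x0).
  move=> xb xb0; have := H xb (Ordinal M0) xb0.
    by rewrite !key ler_pM2l // Gx'.
- move=> [x0 HP]; split => // xb i xb0.
  have Hc := (core nn1 k0 t x0).2 HP.
  by rewrite !key ler_pM2l // Gx'; apply: Hc.
Qed.

Section Intv.
Variable R : realType.

Lemma sq_iff (s D : R) : 0 < s -> (s ^+ 2 <= D <-> s <= Num.sqrt (Order.max D 0)).
Proof.
move=> s0; case: (lerP 0 D) => hD.
- idtac.
  have q0 := sqrtr_ge0 D; have q2 := sqr_sqrtr hD.
  rewrite expr2 in q2 *.
  split => h.
  + rewrite leNgt; apply/negP => hlt. nra.
  + nra.
- idtac.
  rewrite sqrtr0; split => h; exfalso; nra.
Qed.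

Definition Dp (a m n k : R) :=
  (n * k * (m - 1)) ^+ 2 + 4 * n * k * a * (m + 1) - (n * k * (m + 1)) ^+ 2.
Definition rr (a m n k : R) := (Num.sqrt (Order.max (Dp a m n k) 0) - n * k * (m - 1)) / (m + 1).
Definition S0 (a m n k : R) := Order.max ((n + 2) * k) (rr a m n k).

Lemma C3_iff (a m n k t x : R) : 1 <= m -> 0 <= n -> 0 < k -> m * x = a - t -> t <= x ->
  (((n + 2) * k < x - t -> (t + x - n * k) ^+ 2 <= 4 * t * x) <->
   (a - m * S0 a m n k) / (m + 1) <= t).
Proof.
move=> m1 n0 k0 hx tx.
have mp : 0 < m + 1 by lra.
have ha : a = m * x + t by lra.
have e1 : (a - m * S0 a m n k) / (m + 1) <= t <-> x - t <= S0 a m n k.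
  rewrite ler_pdivrMr // ha; split => h; nra.
rewrite e1 /S0 le_max.
have gid : (m + 1) ^+ 2 * ((t + x - n * k) ^+ 2 - 4 * t * x)
   = ((m + 1) * (x - t) + n * k * (m - 1)) ^+ 2 - Dp a m n k.
  by rewrite /Dp ha; ring.
have r_iff : 0 < x - t -> ((t + x - n * k) ^+ 2 <= 4 * t * x <-> x - t <= rr a m n k).
  move=> sp.
  have nk : 0 <= n * k * (m - 1) by apply: mulr_ge0; [apply: mulr_ge0 => //; exact: ltW | lra].
  have sg : 0 < (m + 1) * (x - t) + n * k * (m - 1).
    have : 0 < (m + 1) * (x - t) by apply: mulr_gt0.
    lra.
  have mq : 0 < (m + 1) ^+ 2 by apply: exprn_gt0.
  have eA : (t + x - n * k) ^+ 2 <= 4 * t * x <->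
     ((m + 1) * (x - t) + n * k * (m - 1)) ^+ 2 <= Dp a m n k.
    rewrite -subr_le0 -(pmulr_rle0 _ mq) gid subr_le0; exact: iff_refl.
  have eB : x - t <= rr a m n k <->
     (m + 1) * (x - t) + n * k * (m - 1) <= Num.sqrt (Order.max (Dp a m n k) 0).
    rewrite /rr ler_pdivlMr //; split => h; lra.
  split => h.
  + by apply/eB; apply/(sq_iff _ sg); apply/eA.
  + by apply/eA; apply/(sq_iff _ sg); apply/eB.
have nk2 : 0 < (n + 2) * k by apply: mulr_gt0 => //; lra.
split.
- move=> H; apply/orP; case: (ltrP ((n + 2) * k) (x - t)) => hc.
  + have sp : 0 < x - t by lra.
    by right; apply/(r_iff sp).1; exact: H.
  + by left.
- move=> /orP [h|h] hc; first by exfalso; lra.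
  have sp : 0 < x - t by lra.
  by apply/(r_iff sp).2.
Qed.

End Intv.

Lemma interval (R : realType) (a m n k : R) : 1 <= m -> 1 <= n -> 0 < k ->
  exists lo hi, lo <= hi /\
   (forall t, lo <= t <= hi <-> (0 <= (a - t) / m /\ Pc n k ((a - t) / m) t)) /\
   hi - lo <= `|a / m|.
Proof.
move=> m1 n1 k0.
have m0 : 0 < m by lra.
have mne : m != 0 by rewrite gt_eqF.
have hx : forall t, m * ((a - t) / m) = a - t by move=> t; rewrite mulrC divfK.
case: (lerP a 0) => ha.
- exists a, a; split => //; split; last by rewrite subrr normr_ge0.
  move=> t; split.
  + move=> /andP[h1 h2]; have et : t = a by lra.
    rewrite et subrr mul0r; split => //; split => //; split => h; by rewrite ltxx in h.
  + move=> [x0 [tx [h2 h3]]].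
    have hxt := hx t.
    set x := (a - t) / m in hxt x0 tx h2 h3 *.
    case: (ltrP 0 x) => xp.
      have h := h2 xp.
      have : t < a by nra.
      move=> hta; exfalso; nra.
    have x00 : x = 0 by lra.
    rewrite x00 mulr0 in hxt.
    apply/andP; split; lra.
- set S := S0 a m n k.
  have S0p : 0 < S.
    rewrite /S /S0; apply: (lt_le_trans (_ : 0 < (n + 2) * k)).
      by apply: mulr_gt0 => //; lra.
    by rewrite le_max lexx.
  have d1 : 0 < m * (n + 1) + 1.
    have : 0 < m * (n + 1) by apply: mulr_gt0; lra.
    lra.
  have mp : 0 < m + 1 by lra.
  pose L1 := a / (m * (n + 1) + 1).
  pose L2 := (a - m * S) / (m + 1).
  pose hi := a / (m + 1).
  have L10 : 0 < L1 by rewrite divr_gt0.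
  have L1hi : L1 <= hi.
    rewrite /L1 /hi ler_pdivrMr // mulrAC ler_pdivlMr //.
    have : 0 <= a * (m * n) by apply: mulr_ge0; [lra| apply: mulr_ge0; lra].
    move=> h; nra.
  have L2hi : L2 <= hi.
    rewrite /L2 /hi ler_pdivrMr // divfK ?gt_eqF //.
    have : 0 <= m * S by apply: mulr_ge0; lra.
    lra.
  exists (Order.max L1 L2), hi; split; first by rewrite ge_max L1hi L2hi.
  split.
  + move=> t; split.
    * move=> /andP[]; rewrite ge_max => /andP[h1 h2] h3.
      have hxt := hx t.
      have tpos : 0 < t by lra.
      set x := (a - t) / m in hxt *.
      have tx : t <= x.
        move: h3; rewrite /hi ler_pdivlMr // => h3. nra.
      have xp : 0 < x by lra.
      split; first lra.
      split => //; split => [_|_].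
      - move: h1; rewrite /L1 ler_pdivrMr // => h1. nra.
      - by apply/(C3_iff _ _ _ hxt tx) => //; lra.
    * move=> [x0 [tx [h2 h3]]].
      have hxt := hx t.
      set x := (a - t) / m in hxt x0 tx h2 h3 *.
      have xp : 0 < x.
        rewrite lt_neqAle x0 andbT; apply/negP => /eqP x00.
        rewrite -x00 mulr0 in hxt; lra.
      have h1 : L1 <= t.
        rewrite /L1 ler_pdivrMr //. have := h2 xp. nra.
      have h4 : L2 <= t.
        by apply/(C3_iff _ _ _ hxt tx) => //; lra.
      have h5 : t <= hi.
        rewrite /hi ler_pdivlMr //. nra.
      by rewrite ge_max h1 h4 h5.
  + have h : hi - Order.max L1 L2 <= hi - L1 by rewrite lerD2l lerN2 le_max lexx.
    have : hi <= a / m.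
      rewrite /hi ler_pdivrMr // mulrAC ler_pdivlMr //. nra.
    rewrite ger0_norm; last by rewrite divr_ge0 //; lra.
    lra.
Qed.

Lemma uniq_int (R : realType) (P : R -> Prop) (a b a' b' : R) : a <= b ->
  (forall f, a <= f <= b <-> P f) -> (forall f, a' <= f <= b' <-> P f) -> a' = a /\ b' = b.
Proof.
move=> ab H H'.
have Pa : P a by apply/H; rewrite lexx ab.
have Pb : P b by apply/H; rewrite lexx ab.
have /andP[h1 h2] := (H' a).2 Pa.
have /andP[h3 h4] := (H' b).2 Pb.
have Pa' : P a' by apply/H'; rewrite lexx /=; exact: le_trans h1 h2.
have Pb' : P b' by apply/H'; rewrite lexx andbT; exact: le_trans h1 h2.
have /andP[h5 h6] := (H a').2 Pa'.
have /andP[h7 h8] := (H b').2 Pb'.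
by split; apply: le_anti; rewrite ?h1 ?h5 ?h4 ?h8.
Qed.

Theorem lemma2 (R : realType) :
  exists K : R, 0 < K /\
  forall (M N : nat) (alpha beta C c k : R),
    (1 <= M)%N -> (2 <= N)%N ->
    0 < alpha -> 0 < beta -> 0 < C -> C <= c -> 0 < k ->
    let ax := (alpha - C) / beta in
    let dC := (c - C) / beta in
    let cand := fun f : R => (ax - dC + f) / M%:R in
    exists fl fh : R,
      ((forall f : R, fl <= f <= fh <-> @in_X R M N alpha beta C c k f (cand f)) /\
       (forall fl' fh' : R,
          (forall f : R, fl' <= f <= fh' <-> @in_X R M N alpha beta C c k f (cand f)) ->
          fl' = fl /\ fh' = fh)) /\
      (forall f : R, fl <= f <= fh ->
         forall j : 'I_N,
           @spot R M N alpha beta c k (fun _ => f) (fun _ => cand f) j = 0) /\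
      `|fh - fl| <= K * `|ax / M%:R|.
Proof.
exists 1; split; first exact: ltr01.
move=> M N alpha beta C c k M1 N2 a0 b0 C0 Cc k0 ax dC cand.
have m1 : 1 <= M%:R :> R by rewrite ler1n.
have N0 : (0 < N)%N by apply: leq_trans N2.
have n1 : 1 <= N%:R :> R by rewrite ler1n.
have [lo [hi [lohi [Hint Hb]]]] := interval ax m1 n1 k0.
exists (dC - hi), (dC - lo).
have Hiff : forall f, dC - hi <= f <= dC - lo <-> in_X M N alpha beta C c k f (cand f).
  move=> f; have := Hint (dC - f).
  have -> : ax - (dC - f) = ax - dC + f by ring.
  move=> H; have H2 := inX_iff alpha C c M1 N0 b0 k0 f.
  split => h.
  - apply/H2; apply/H; move: h => /andP[h1 h2]; apply/andP; split; lra.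
  - have /andP[h1 h2] := (H.2 (H2.1 h)); apply/andP; split; lra.
split; [split|split].
- exact: Hiff.
- move=> fl' fh' H'; apply: (uniq_int _ Hiff H'); lra.
- move=> f _ j; apply: spot_val => //.
  have mne : M%:R != 0 :> R by rewrite gt_eqF // (lt_le_trans ltr01).
  have bne : beta != 0 by rewrite gt_eqF.
  rewrite sumr_const card_ord -[cand f *+ M]mulr_natl.
  have -> : M%:R * cand f = ax - dC + f by rewrite /cand mulrC divfK.
  rewrite /ax /dC.
  have -> : alpha - c - beta * ((alpha - C) / beta - (c - C) / beta + f) + beta * f = 0.
    by field.
  rewrite mul0r; split; first by split; [exact: lexx | exact: ltW].
  by split => h; [exact: lexx | rewrite ltxx in h].
- rewrite mul1r.
  have -> : dC - lo - (dC - hi) = hi - lo by ring.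
  by rewrite ger0_norm // subr_ge0.
Qed.
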